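(* Let $p$ be a prime and $G=C_p\times C_p$. Then there are exactly $2^{p+2}+p+1$ $G$-transfer systems. Moreover, the lattice $\mathrm{Tr}(G)$ (ordered by inclusion of relations) is the disjoint union of three subsets $B$, $M$, $T$ where $B$ and $T$ are each (as subposets) isomorphic to the Boolean lattice $[1]^{p+1}$, $M$ consists of $p+1$ elements, and the covering relations of $\mathrm{Tr}(G)$ are exactly the covering relations internal to $B$, the covering relations internal to $T$, and the following: (i) the $p+1$ elements of $B$ covered by $\max B$ are put in bijection with the elements of $M$, and each element of $M$ covers exactly its corresponding element of $B$; (ii) the $p+1$ elements of $T$ covering $\min T$ are put in bijection with the elements of $M$, and each such element of $T$ covers exactly its corresponding element of $M$; (iii) $\min T$ covers $\max B$.
   Context: For a finite lattice $(P,\le)$, a transfer system on $P$ is a partial order $R$ on $P$ refining $\le$ (i.e. $x\,R\,y\Rightarrow x\le y$) that is closed under restriction: if $x\,R\,z$ and $y\le z$ then $(x\wedge y)\,R\,y$. For a finite group $G$, a $G$-transfer system is a transfer system on the subgroup lattice $\mathrm{Sub}(G)$ that is moreover closed under conjugation (if $H\,R\,K$ then $gHg^{-1}\,R\,gKg^{-1}$ for all $g\in G$). $\mathrm{Tr}(G)$ denotes the set of $G$-transfer systems, partially ordered by $R\le R'$ iff every relation of $R$ is a relation of $R'$; it is a lattice. *)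

(* Defs.v *)
From mathcomp Require Import all_boot all_fingroup all_algebra all_solvable.
Set Implicit Arguments. Unset Strict Implicit. Unset Printing Implicit Defensive.
Local Open Scope group_scope.

Notation grel_on gT := {set ({group gT} * {group gT})}.

Section TransferSystems.
Variable gT : finGroupType.
Implicit Types (G H K L : {group gT}) (R : grel_on gT).

(* R is a G-transfer system: a partial order on Sub(G) refining inclusion
   (reflexive on Sub(G), transitive; antisymmetry follows from refinement),
   closed under restriction and under conjugation by elements of G. *)
Definition is_transfer_system G R : bool :=
  [&& [forall H : {group gT}, forall K : {group gT}, ((H, K) \in R) ==> (H \subset K) && (K \subset G)],
      [forall H : {group gT}, (H \subset G) ==> ((H, H) \in R)],
      [forall H : {group gT}, forall K : {group gT}, forall L : {group gT},
         ((H, K) \in R) && ((K, L) \in R) ==> ((H, L) \in R)],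
      [forall H : {group gT}, forall K : {group gT}, forall L : {group gT},
         ((H, K) \in R) && (L \subset K) ==> (((H :&: L)%G, L) \in R)]
    & [forall H : {group gT}, forall K : {group gT}, forall g in G,
         ((H, K) \in R) ==> (((H :^ g)%G, (K :^ g)%G) \in R)]].

Definition Tr G : {set grel_on gT} := [set R | is_transfer_system G R].

End TransferSystems.

Definition covin (A : finType) (S : {set {set A}}) (X Y : {set A}) : bool :=
  [&& X \in S, Y \in S, X \proper Y &
      [forall Z in S, ~~ ((X \proper Z) && (Z \proper Y))]].

(* Main.v *)
Require Import Defs.
From mathcomp Require Import all_boot all_fingroup all_algebra all_solvable.
Local Open Scope group_scope.

Lemma Zmul_comm p (a c : 'Z_p) : a * c = c * a.
Proof. by apply: val_inj; rewrite /= addnC. Qed.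
Lemma Zexp p (z : 'Z_p) : prime p -> z ^+ p = 1.
Proof.
move=> pp; have e : #|[set: 'Z_p]| = p by rewrite cardsT card_ord Zp_cast ?prime_gt1.
by rewrite -[X in z ^+ X]e expg_cardG ?inE.
Qed.
Lemma expg_pair (p : nat) (x : 'Z_p * 'Z_p) n : x ^+ n = (x.1 ^+ n, x.2 ^+ n).
Proof. elim: n => [|n IH]; first by []. by rewrite !expgS IH. Qed.
Lemma abelZ (p : nat) : prime p -> p.-abelem [set: 'Z_p * 'Z_p].
Proof.
move=> pp; apply/(abelemP pp); split.
  apply/centsP => x _ y _. case: x => a b; case: y => c d.
  by rewrite /commute; congr pair; apply: Zmul_comm.
by move=> [a b] _; rewrite expg_pair /= !Zexp.
Qed.
Lemma cardZ2 p : prime p -> #|[set: 'Z_p * 'Z_p]| = (p ^ 2)%N.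
Proof. by move=> pp; rewrite cardsT card_prod card_ord Zp_cast ?prime_gt1. Qed.

Lemma Gfacts p gT (G : {group gT}) : prime p -> G \isog [set: 'Z_p * 'Z_p] ->
  [/\ abelian G, #|'E_p^1(G)| = p.+1,
      forall H : {group gT}, H \subset G -> [\/ H = 1%G, H = G | H \in 'E_p^1(G)],
      forall X, X \in 'E_p^1(G) -> X :!=: 1 &
      forall X, X \in 'E_p^1(G) -> X :!=: G].
Proof.
move=> pp iso.
have abG : p.-abelem G.
  by move: iso; rewrite isog_sym (isog_abelem_card _ (abelZ _ pp)) => /andP[].
have oG : #|G| = (p ^ 2)%N by rewrite (card_isog iso) cardZ2.
have E2 : G \in 'E_p^2(G) by apply/pnElemP; split; rewrite ?oG ?pfactorK.
have p1 := prime_gt1 pp.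
split.
- exact: abelem_abelian abG.
- exact: card_p1Elem_p2Elem E2.
- move=> H sHG; have := cardSg sHG; rewrite oG => /(@dvdn_pfactor p _ _ pp)[[|[|[|m]]] //].
  + by move=> _ /eqP; rewrite -trivg_card1 => /eqP/val_inj->; constructor 1.
  + by move=> _ oH; constructor 3; rewrite p1ElemE // !inE sHG oH /=.
  + move=> _ oH; constructor 2; apply/val_inj/eqP; by rewrite /= eqEcard sHG oG oH leqnn.
- move=> X /card_p1Elem oX; apply/eqP => X1. by move: oX; rewrite X1 cards1 => pe; rewrite -pe in p1.
- move=> X /card_p1Elem oX; apply/eqP => XG. move: oX; rewrite XG oG => e.
  move: e; rewrite expnS expn1 => e.
  have : (p * p == p * 1)%N by rewrite muln1 e.
  by rewrite eqn_pmul2l ?prime_gt0 // => /eqP e1; rewrite e1 in p1.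
Qed.

Section Comb.
Variables (gT : finGroupType) (G : {group gT}) (n : nat) (c : 'I_n -> {group gT}).
Hypotheses (abG : abelian G) (cG : forall i, c i \subset G)
  (c1 : forall i, c i != 1%G) (cGn : forall i, c i != G) (G1 : G != 1%G)
  (cinj : injective c) (cI : forall i j, i != j -> c i :&: c j = 1)
  (subs : forall H : {group gT}, H \subset G ->
     [\/ H = 1%G, H = G | exists i, H = c i]).

Definition Dl : grel_on gT := [set x : {group gT} * {group gT} | (x.1 == x.2) && (x.1 \subset G)].
Definition enc (S U : {set 'I_n}) (b : bool) : grel_on gT :=
  Dl :|: [set (1%G, c i) | i in S] :|: (if b then [set (1%G, G)] else set0)
     :|: [set (c i, G) | i in U].

Lemma c1' i : (1%G == c i) = false.
Proof. by rewrite eq_sym (negbTE (c1 i)). Qed.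
Lemma cG' i : (c i == G) = false.
Proof. exact: negbTE (cGn i). Qed.
Lemma G1' : (G == 1%G) = false.
Proof. exact: negbTE G1. Qed.

Lemma c1F {i} : 1%G = c i -> False.
Proof. by move=> e; move: (c1' i); rewrite e eqxx. Qed.
Lemma c1F' {i} : c i = 1%G -> False.
Proof. by move=> e; apply: (c1F (esym e)). Qed.
Lemma cGF {i} : c i = G -> False.
Proof. by move=> e; move: (cG' i); rewrite e eqxx. Qed.
Lemma cGF' {i} : G = c i -> False.
Proof. by move=> e; apply: (cGF (esym e)). Qed.
Lemma G1F : G = 1%G -> False.
Proof. by move=> e; move: G1'; rewrite e eqxx. Qed.
Lemma G1F' : 1%G = G -> False.
Proof. by move=> e; apply: (G1F (esym e)). Qed.

Lemma encP (H K : {group gT}) S U b : (H, K) \in enc S U b ->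
  [\/ H = K /\ H \subset G, exists2 i, i \in S & (H, K) = (1%G, c i),
      b /\ (H, K) = (1%G, G) | exists2 i, i \in U & (H, K) = (c i, G)].
Proof.
rewrite /enc !inE => /orP[/orP[/orP[/andP[/eqP e s]|/imsetP[i iS e]]|]|/imsetP[i iU e]].
- by constructor 1.
- by constructor 2; exists i.
- by case: b => //; rewrite inE => /eqP e; constructor 3.
- by constructor 4; exists i.
Qed.

Lemma memD (H : {group gT}) S U b : H \subset G -> (H, H) \in enc S U b.
Proof. by move=> sHG; rewrite /enc !inE eqxx sHG. Qed.

Lemma mem1c i S U b : ((1%G, c i) \in enc S U b) = (i \in S).
Proof.
apply/idP/idP => [/encP[[e _]|[j jS [e]]|[_ [e]]|[j _ [e _]]] | iS].
- by move: (c1' i); rewrite e eqxx.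
- by rewrite (cinj _ _ e).
- by move: (cG' i); rewrite e eqxx.
- by move: (c1' j); rewrite e eqxx.
- by rewrite /enc !inE; apply/orP; left; apply/orP; left; apply/orP; right; apply/imsetP; exists i.
Qed.

Lemma mem1G S U b : ((1%G, G) \in enc S U b) = b.
Proof.
apply/idP/idP; last first.
  by move=> hb; rewrite /enc !inE hb inE eqxx !orbT.
case/encP.
- by move=> [e _]; move: G1'; rewrite -e eqxx.
- by move=> [j _ [e]]; move: (cG' j); rewrite e eqxx.
- by case.
- by move=> [j _ e]; case: (c1F (congr1 fst e)).
Qed.

Lemma memcG i S U b : ((c i, G) \in enc S U b) = (i \in U).
Proof.
apply/idP/idP; last first.
  by move=> iU; rewrite /enc !inE; apply/orP; right; apply/imsetP; exists i.
case/encP.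
- by move=> [e _]; case: (cGF e).
- by move=> [j _ e]; case: (c1F' (congr1 fst e)).
- by move=> [_ e]; case: (c1F' (congr1 fst e)).
- by move=> [j jU e]; rewrite (cinj _ _ (congr1 fst e)).
Qed.

Lemma encS S U b S' U' b' :
  (enc S U b \subset enc S' U' b') = [&& S \subset S', U \subset U' & b ==> b'].
Proof.
apply/idP/idP.
- move/subsetP=> h; apply/and3P; split.
  + by apply/subsetP=> i iS; rewrite -(mem1c i S' U' b'); apply: h; rewrite mem1c.
  + by apply/subsetP=> i iS; rewrite -(memcG i S' U' b'); apply: h; rewrite memcG.
  + by apply/implyP=> hb; rewrite -(mem1G S' U' b'); apply: h; rewrite mem1G.
- case/and3P=> sS sU hb; apply/subsetP=> [[H K]] /encP[[-> s]|[i iS [-> ->]]|[b1 [-> ->]]|[i iU [-> ->]]].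
  + exact: memD.
  + by rewrite mem1c (subsetP sS).
  + by rewrite mem1G (implyP hb).
  + by rewrite memcG (subsetP sU).
Qed.

Lemma enc_inj S U b S' U' b' : enc S U b = enc S' U' b' -> [/\ S = S', U = U' & b = b'].
Proof.
move=> e.
have : enc S U b \subset enc S' U' b' by rewrite e.
rewrite encS => /and3P[s1 u1 b1].
have : enc S' U' b' \subset enc S U b by rewrite e.
rewrite encS => /and3P[s2 u2 b2].
split; first by apply/eqP; rewrite eqEsubset s1.
  by apply/eqP; rewrite eqEsubset u1.
by clear e; case: b b' b1 b2 => [] [].
Qed.

Definition valid (S U : {set 'I_n}) (b : bool) : Prop :=
  [/\ b -> S = setT, forall i j, i \in U -> j != i -> j \in S
    & forall i, i \in U -> i \in S -> b].

Lemma sub1 (H : {group gT}) : H \subset [1 gT] -> H = 1%G.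
Proof. by rewrite subG1 => /eqP e; apply: val_inj. Qed.

Lemma sub_c (H : {group gT}) j : H \subset c j -> H = 1%G \/ H = c j.
Proof.
move=> s; have sG := subset_trans s (cG j).
case: (subs _ sG) => [->|e|[i e]]; first by left.
  by move: s; rewrite e => s; case: (@cGF j); apply/val_inj/eqP; rewrite eqEsubset cG s.
have [ij|ij] := eqVneq i j; first by right; rewrite e ij.
left; apply: val_inj => /=; rewrite e -(cI _ _ ij); apply/esym/setIidPl; rewrite -e //.
Qed.

Lemma gI1 (A : {group gT}) : (1 :&: A)%G = 1%G.
Proof. by apply: val_inj; rewrite /= setI1g. Qed.

Lemma tr_enc R : R \in Tr G ->
  valid [set i | (1%G, c i) \in R] [set i | (c i, G) \in R] ((1%G, G) \in R) /\
  R = enc [set i | (1%G, c i) \in R] [set i | (c i, G) \in R] ((1%G, G) \in R).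
Proof.
rewrite inE /is_transfer_system => /and5P[h1 h2 h3 h4 _].
have H1 : forall H K : {group gT}, (H, K) \in R -> (H \subset K) && (K \subset G).
  by move=> H K; apply/implyP; exact: (forallP (forallP h1 H) K).
have H2 : forall H : {group gT}, H \subset G -> (H, H) \in R.
  by move=> H; apply/implyP; exact: (forallP h2 H).
have H3 : forall H K L : {group gT}, (H, K) \in R -> (K, L) \in R -> (H, L) \in R.
  move=> H K L a b; move: (forallP (forallP (forallP h3 H) K) L).
  by rewrite a b => /implyP; apply.
have H4 : forall H K L : {group gT}, (H, K) \in R -> L \subset K -> ((H :&: L)%G, L) \in R.
  move=> H K L a b; move: (forallP (forallP (forallP h4 H) K) L).
  by rewrite a b => /implyP; apply.
split.
- split.
  + move=> hb; apply/setP=> j; rewrite !inE.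
    by rewrite -(gI1 (c j)); apply: H4 hb (cG j).
  + move=> i j; rewrite !inE => iU ji.
    have -> : 1%G = (c i :&: c j)%G by apply: val_inj; rewrite /= cI // eq_sym.
    exact: H4 iU (cG j).
  + by move=> i; rewrite !inE => iU iS; apply: H3 iS iU.
- apply/setP=> [[H K]]; apply/idP/idP.
  + move=> hHK; have /andP[sHK sKG] := H1 _ _ hHK.
    have sHG := subset_trans sHK sKG.
    have [eHK|nHK] := eqVneq H K; first by rewrite eHK memD.
    case: (subs _ sKG) => [eK|eK|[j eK]].
    * by move: sHK nHK; rewrite eK => /sub1 ->; rewrite eqxx.
    * case: (subs _ sHG) => [eH|eH|[i eH]].
      -- by rewrite eH eK mem1G -eK -eH.
      -- by move: nHK; rewrite eH eK eqxx.
      -- by rewrite eH eK memcG inE -eK -eH.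
    * move: sHK nHK; rewrite eK => sHK nHK; have [eH|eH] := sub_c _ _ sHK.
      -- by rewrite eH mem1c inE -eK -eH.
      -- by move: nHK; rewrite eH eqxx.
  + move=> /encP[[-> s]|[i]|[]|[i]].
    * exact: H2.
    * by rewrite inE => iS [-> ->].
    * by move=> hb [-> ->].
    * by rewrite inE => iU [-> ->].
Qed.


Lemma enc_sub (H K : {group gT}) S U b : (H, K) \in enc S U b -> (H \subset K) && (K \subset G).
Proof.
case/encP=> [[-> s]|[i _ [-> ->]]|[_ [-> ->]]|[i _ [-> ->]]].
- by rewrite subxx s.
- by rewrite sub1G cG.
- by rewrite sub1G subxx.
- by rewrite cG subxx.
Qed.

Lemma conjG_ab (A : {group gT}) g : A \subset G -> g \in G -> (A :^ g)%G = A.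
Proof.
move=> sAG gG; apply: val_inj => /=.
exact: (normsP (sub_abelian_norm abG sAG)) g gG.
Qed.

Lemma enc_tr S U b : valid S U b -> enc S U b \in Tr G.
Proof.
case=> v1 v2 v3; rewrite inE /is_transfer_system; apply/and5P; split.
- apply/forallP=> H; apply/forallP=> K; apply/implyP; exact: enc_sub.
- by apply/forallP=> H; apply/implyP; exact: memD.
- apply/forallP=> H; apply/forallP=> K; apply/forallP=> L; apply/implyP=> /andP[hHK hKL].
  move: hKL; case/encP: hHK => [[-> _]|[i iS [-> ->]]|[hb [-> ->]]|[i iU [-> ->]]] //.
  + case/encP => [[<- _]|[j _ e]|[_ e]|[j jU e]].
    * by rewrite mem1c.
    * by case: (c1F' (congr1 fst e)).
    * by case: (c1F' (congr1 fst e)).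
    * have ij := cinj _ _ (congr1 fst e); have /= -> := congr1 snd e; rewrite mem1G.
      by apply: (v3 i); rewrite // ij.
  + case/encP => [[<- _]|[j _ e]|[_ e]|[j jU e]].
    * by rewrite mem1G.
    * by case: (G1F (congr1 fst e)).
    * by case: (G1F (congr1 fst e)).
    * by case: (cGF' (congr1 fst e)).
  + case/encP => [[<- _]|[j _ e]|[_ e]|[j jU e]].
    * by rewrite memcG.
    * by case: (G1F (congr1 fst e)).
    * by case: (G1F (congr1 fst e)).
    * by case: (cGF' (congr1 fst e)).
- apply/forallP=> H; apply/forallP=> K; apply/forallP=> L; apply/implyP=> /andP[hHK sLK].
  case/encP: hHK => [[eHK sHG]|[i iS [-> eK]]|[hb [-> eK]]|[i iU [-> eK]]].
  + have -> : (H :&: L)%G = L by apply: val_inj; rewrite /=; apply/setIidPr; rewrite eHK.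
    by apply: memD; apply: subset_trans sLK _; rewrite -eHK.
  + rewrite gI1; move: sLK; rewrite eK => sLK.
    by case: (sub_c _ _ sLK) => ->; [apply: memD; apply: sub1G | rewrite mem1c].
  + rewrite gI1; move: sLK; rewrite eK => sLK.
    case: (subs _ sLK) => [->|->|[j ->]].
    * by apply: memD; apply: sub1G.
    * by rewrite mem1G.
    * by rewrite mem1c v1 // inE.
  + move: sLK; rewrite eK => sLK.
    case: (subs _ sLK) => [->|->|[j ->]].
    * rewrite (_ : (c i :&: 1)%G = 1%G); first by apply: memD; apply: sub1G.
      by apply: val_inj; rewrite /= setIg1.
    * rewrite (_ : (c i :&: G)%G = c i); first by rewrite memcG.
      by apply: val_inj; rewrite /=; apply/setIidPl; apply: cG.
    * have [ij|ij] := eqVneq i j.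
        rewrite -ij (_ : (c i :&: c i)%G = c i); first by apply: memD; apply: cG.
        by apply: val_inj; rewrite /= setIid.
      rewrite (_ : (c i :&: c j)%G = 1%G); first by rewrite mem1c; apply: (v2 i) => //; rewrite eq_sym.
      by apply: val_inj; rewrite /= cI.
- apply/forallP=> H; apply/forallP=> K; apply/forall_inP=> g gG; apply/implyP=> hHK.
  have /andP[sHK sKG] := enc_sub _ _ _ _ _ hHK.
  by rewrite !conjG_ab // (subset_trans sHK sKG).
Qed.

Lemma valid_forms S U b : valid S U b ->
  [\/ U = set0 /\ b = false, exists i, [/\ S = ~:[set i], U = [set i] & b = false]
    | S = setT /\ b = true].
Proof.
case=> v1 v2 v3; case: b v1 v3 => v1 v3; first by constructor 3; split => //; apply: v1.
have [U0|/set0Pn[i iU]] := eqVneq U set0; first by constructor 1.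
have niS : i \notin S by apply/negP => iS; have := v3 i iU iS.
constructor 2; exists i; split => //.
- apply/setP=> j; rewrite !inE; have [->|ji] := eqVneq j i; first exact: negbTE niS.
  exact: v2 i j iU ji.
- apply/setP=> k; rewrite inE; apply/idP/eqP => [kU|->//].
  have [//|ki] := eqVneq k i.
  by case/negP: niS; apply: (v2 k i kU); rewrite eq_sym.
Qed.

Lemma validB S : valid S set0 false.
Proof. by split => // i; rewrite inE. Qed.
Lemma validM i : valid (~:[set i]) [set i] false.
Proof. split => // [j k|j]; rewrite !inE => /eqP ->; first by move=> ->.
by rewrite eqxx. Qed.
Lemma validT U : valid setT U true.
Proof. by split => // i j _ _; rewrite inE. Qed.


Local Notation fB X := (enc X set0 false).
Local Notation fT U := (enc setT U true).
Local Notation mm i := (enc (~:[set i]) [set i] false).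
Definition Bs := [set fB X | X in [set: {set 'I_n}]].
Definition Ms := [set mm i | i in [set: 'I_n]].
Definition Ts := [set fT X | X in [set: {set 'I_n}]].

Lemma inB S : fB S \in Bs. Proof. by apply/imsetP; exists S. Qed.
Lemma inM i : mm i \in Ms. Proof. by apply/imsetP; exists i. Qed.
Lemma inT S : fT S \in Ts. Proof. by apply/imsetP; exists S. Qed.
Lemma trB S : fB S \in Tr G. Proof. exact: enc_tr (validB S). Qed.
Lemma trM i : mm i \in Tr G. Proof. exact: enc_tr (validM i). Qed.
Lemma trT S : fT S \in Tr G. Proof. exact: enc_tr (validT S). Qed.

Lemma trF R : R \in Tr G -> [\/ exists S, R = fB S, exists i, R = mm i | exists U, R = fT U].
Proof.
case/tr_enc => v ->; case: (valid_forms _ _ _ v) => [[-> ->]|[i [-> -> ->]]|[-> ->]].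
- by constructor 1; eexists.
- by constructor 2; exists i.
- by constructor 3; eexists.
Qed.

Lemma penc S U b S' U' b' : (enc S U b \proper enc S' U' b') =
  [&& S \subset S', U \subset U', b ==> b' & ~~ [&& S' \subset S, U' \subset U & b' ==> b]].
Proof. by rewrite properE !encS -!andbA. Qed.

Lemma BsTr : Bs \subset Tr G. Proof. by apply/subsetP=> x /imsetP[S _ ->]; exact: trB. Qed.
Lemma TsTr : Ts \subset Tr G. Proof. by apply/subsetP=> x /imsetP[S _ ->]; exact: trT. Qed.
Lemma MsTr : Ms \subset Tr G. Proof. by apply/subsetP=> x /imsetP[S _ ->]; exact: trM. Qed.

Lemma TrE : Tr G = Bs :|: Ms :|: Ts.
Proof.
apply/eqP; rewrite eqEsubset !subUset BsTr MsTr TsTr !andbT.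
apply/subsetP=> R RT; case: (trF _ RT) => [[S ->]|[i ->]|[U ->]]; rewrite !inE ?inB ?inM ?inT ?orbT //.
Qed.

Lemma disjP (T : finType) (A B : {set T}) :
  (forall x, x \in A -> x \in B -> False) -> [disjoint A & B].
Proof.
move=> h; rewrite -setI_eq0; apply/eqP/setP => x; rewrite !inE.
by apply/negbTE/negP => /andP[a b]; exact: h x a b.
Qed.

Lemma disjBM : [disjoint Bs & Ms].
Proof.
apply: disjP => x /imsetP[S _ ->] /imsetP[i _ e].
case: (enc_inj _ _ _ _ _ _ e) => _ /setP/(_ i); by rewrite !inE eqxx.
Qed.
Lemma disjBT : [disjoint Bs & Ts].
Proof. by apply: disjP => x /imsetP[S _ ->] /imsetP[i _ e]; case: (enc_inj _ _ _ _ _ _ e). Qed.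
Lemma disjMT : [disjoint Ms & Ts].
Proof. by apply: disjP => x /imsetP[S _ ->] /imsetP[i _ e]; case: (enc_inj _ _ _ _ _ _ e). Qed.

Lemma fB_inj : injective (fun X => fB X). Proof. by move=> X Y /(enc_inj _ _ _ _ _ _)[]. Qed.
Lemma fT_inj : injective (fun X => fT X). Proof. by move=> X Y /(enc_inj _ _ _ _ _ _)[]. Qed.
Lemma mm_inj : injective (fun i => mm i).
Proof. by move=> i j /(enc_inj _ _ _ _ _ _)[_ /setP/(_ i)]; rewrite !inE eqxx => /esym/eqP. Qed.

Lemma card_disjU (T : finType) (A B : {set T}) : [disjoint A & B] -> #|A :|: B| = (#|A| + #|B|)%N.
Proof. by move=> h; rewrite cardsU (disjoint_setI0 h) cards0 subn0. Qed.

Lemma cardTr : #|Tr G| = (2 ^ n + n + 2 ^ n)%N.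
Proof.
have cs : #|[set: {set 'I_n}]| = (2 ^ n)%N by rewrite -powersetT card_powerset cardsT card_ord.
rewrite TrE card_disjU; last first.
  apply: disjP => x; rewrite inE => /orP[xB|xM] xT.
    by move: disjBT; rewrite -setI_eq0 => /eqP/setP/(_ x); rewrite !inE xB xT.
  by move: disjMT; rewrite -setI_eq0 => /eqP/setP/(_ x); rewrite !inE xM xT.
rewrite card_disjU ?disjBM // /Bs /Ms /Ts !card_imset //; last exact: fB_inj.
- by rewrite cs cardsT card_ord.
- exact: fT_inj.
- exact: mm_inj.
Qed.


Lemma covin_sub (A B' : {set grel_on gT}) X Y :
  covin A X Y -> B' \subset A -> X \in B' -> Y \in B' -> covin B' X Y.
Proof.
case/and4P=> _ _ p /forall_inP h sBA XB YB; rewrite /covin XB YB p /=.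
by apply/forall_inP=> Z ZB; apply: h; apply: (subsetP sBA).
Qed.

Lemma downB Z S' : Z \in Tr G -> Z \subset fB S' -> Z \in Bs.
Proof.
case/(trF _)=> [[S ->]|[i ->]|[U ->]] //; first by rewrite inB.
  by rewrite encS /= ?sub1set ?inE ?andbF ?andFb.
by rewrite encS /= ?sub1set ?inE ?andbF ?andFb.
Qed.

Lemma upT Z U : Z \in Tr G -> fT U \subset Z -> Z \in Ts.
Proof.
case/(trF _)=> [[S ->]|[i ->]|[U' ->]] //; last by rewrite inT.
  by rewrite encS /= ?andbF ?andFb.
by rewrite encS /= ?andbF ?andFb.
Qed.

Lemma cover X Y : covin (Tr G) X Y = [|| covin Bs X Y, covin Ts X Y,
  [exists i, (X == fB (~: [set i])) && (Y == mm i)],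
  [exists i, (X == mm i) && (Y == fT [set (1 : {perm 'I_n}) i])]
  | (X == fB setT) && (Y == fT set0)].
Proof.
apply/idP/idP.
- move=> cov; have /and4P[XT YT pXY /forall_inP nb] := cov.
  have nbZ : forall S U b, valid S U b -> ~~ ((X \proper enc S U b) && (enc S U b \proper Y)).
    by move=> S U b v; apply: nb; apply: enc_tr.
  case: (trF _ XT) => [[S eX]|[i eX]|[U eX]]; case: (trF _ YT) => [[S' eY]|[j eY]|[U' eY]];
    rewrite eX eY in pXY nbZ; rewrite penc in pXY.
  + by apply/orP; left; apply: (covin_sub _ _ _ _ cov BsTr); rewrite ?eX ?eY inB.
  + case/and4P: pXY => sS _ _ _.
    have eS : S = ~:[set j].
      apply/eqP; rewrite eqEsubset sS /=; apply/negPn/negP => ns.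
      by move: (nbZ _ _ _ (validB (~:[set j]))); rewrite !penc sS (negbTE ns) !subxx sub0set sub1set inE.
    apply/orP; right; apply/orP; right; apply/orP; left; apply/existsP; exists j.
    by rewrite eX eY eS !eqxx.
  + have [eS|nS] := eqVneq S setT.
      have [eU|nU] := eqVneq U' set0; first by rewrite eX eY eS eU !eqxx !orbT.
      by move: (nbZ _ _ _ (validT set0)); rewrite !penc eS !subxx sub0set subset0 (negbTE nU).
    by move: (nbZ _ _ _ (validB setT)); rewrite !penc subsetT subTset (negbTE nS) !subxx !sub0set /= andbF.
  + by case/and4P: pXY => _; rewrite sub1set inE.
  + case/and4P: pXY => _; rewrite sub1set in_set1 => /eqP ij _.
    by rewrite ij !subxx.
  + case/and4P: pXY => _ iU _ _.
    have [eU|nU] := eqVneq U' [set i].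
      apply/orP; right; apply/orP; right; apply/orP; right; apply/orP; left.
      by apply/existsP; exists i; rewrite perm1 eX eY eU !eqxx.
    have nU' : ~~ (U' \subset [set i]) by apply: contra nU => h; rewrite eqEsubset h.
    by move: (nbZ _ _ _ (validT [set i])); rewrite !penc !subsetT !subxx iU (negbTE nU') /= andbF.
  + by case/and4P: pXY.
  + by case/and4P: pXY.
  + by apply/orP; right; apply/orP; left; apply: (covin_sub _ _ _ _ cov TsTr); rewrite ?eX ?eY inT.
- case/orP=> [cB|/orP[cT|/orP[/existsP[i /andP[/eqP eX /eqP eY]]|/orP[/existsP[i /andP[/eqP eX /eqP eY]]|/andP[/eqP eX /eqP eY]]]]].
  + have /and4P[XB YB pXY /forall_inP nb] := cB.
    rewrite /covin (subsetP BsTr _ XB) (subsetP BsTr _ YB) pXY /=.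
    apply/forall_inP => Z ZT; apply/negP => /andP[p1 p2].
    case/imsetP: YB => S' _ eY.
    have ZB : Z \in Bs by apply: (downB _ S' ZT); rewrite -eY; exact: proper_sub p2.
    by move: (nb Z ZB); rewrite p1 p2.
  + have /and4P[XB YB pXY /forall_inP nb] := cT.
    rewrite /covin (subsetP TsTr _ XB) (subsetP TsTr _ YB) pXY /=.
    apply/forall_inP => Z ZT; apply/negP => /andP[p1 p2].
    case/imsetP: XB => U _ eX.
    have ZB : Z \in Ts by apply: (upT _ U ZT); rewrite -eX; exact: proper_sub p1.
    by move: (nb Z ZB); rewrite p1 p2.
  + rewrite /covin eX eY trB trM penc !subxx sub0set sub1set inE /=.
    apply/forall_inP => Z ZT; apply/negP => /andP[].
    case: (trF _ ZT) => [[S ->]|[j ->]|[U ->]]; rewrite !penc.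
    * by case/and4P=> _ _ _ h1 /and4P[h2 _ _ _]; move: h1; rewrite h2 sub0set.
    * move=> _ /and4P[_ h _ h4]; move: h; rewrite sub1set in_set1 => /eqP ji.
      by move: h4; rewrite ji !subxx.
    * by move=> _ /and4P[].
  + rewrite /covin eX eY perm1 trM trT penc !subsetT sub1set inE eqxx /= andbF /=.
    apply/forall_inP => Z ZT; apply/negP => /andP[].
    case: (trF _ ZT) => [[S ->]|[j ->]|[U ->]]; rewrite !penc.
    * by case/and4P=> _; rewrite sub1set inE.
    * case/and4P=> _; rewrite sub1set in_set1 => /eqP ij.
      by rewrite ij !subxx.
    * by case/and4P=> _ h1 _ _ /and4P[_ h2 _]; rewrite subxx h1.
  + rewrite /covin eX eY trB trT penc !subxx ?sub0set /=.
    apply/forall_inP => Z ZT; apply/negP => /andP[].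
    case: (trF _ ZT) => [[S ->]|[j ->]|[U ->]]; rewrite !penc.
    * by rewrite !subxx subsetT /= !andbF.
    * by case/and4P; rewrite subTset => /eqP/setP/(_ j); rewrite !inE eqxx.
    * by move=> _ /and4P[_ h _]; rewrite subset0 in h; rewrite (eqP h) !subxx.
Qed.


Lemma main_gen : exists (fB fT : {set 'I_n} -> grel_on gT) (m : 'I_n -> grel_on gT)
         (sigma : {perm 'I_n}),
    let B := [set fB X | X in [set: {set 'I_n}]] in
    let T := [set fT X | X in [set: {set 'I_n}]] in
    let M := [set m i | i in [set: 'I_n]] in
    [/\ (forall X Y, (fB X \subset fB Y) = (X \subset Y)),
        (forall X Y, (fT X \subset fT Y) = (X \subset Y)),
        injective m,
        Tr G = B :|: M :|: T /\
        [/\ [disjoint B & M], [disjoint B & T] & [disjoint M & T]] &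
        forall X Y, covin (Tr G) X Y =
          [|| covin B X Y, covin T X Y,
              [exists i, (X == fB (~: [set i])) && (Y == m i)],
              [exists i, (X == m i) && (Y == fT [set sigma i])]
            | (X == fB setT) && (Y == fT set0)]].
Proof.
exists (fun X => fB X), (fun X => fT X), (fun i => mm i), 1; split.
- by move=> X Y; rewrite encS subxx /= andbT.
- by move=> X Y; rewrite encS !subxx /= andbT.
- exact: mm_inj.
- split; first exact: TrE.
  split; [exact: disjBM | exact: disjBT | exact: disjMT].
- exact: cover.
Qed.

End Comb.


Theorem theorem5p4 (p : nat) (gT : finGroupType) (G : {group gT}) :
  prime p -> G \isog [set: 'Z_p * 'Z_p] ->
  #|Tr G| = (2 ^ p.+2 + p + 1)%N /\
  exists (fB fT : {set 'I_p.+1} -> grel_on gT) (m : 'I_p.+1 -> grel_on gT)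
         (sigma : {perm 'I_p.+1}),
    let B := [set fB X | X in [set: {set 'I_p.+1}]] in
    let T := [set fT X | X in [set: {set 'I_p.+1}]] in
    let M := [set m i | i in [set: 'I_p.+1]] in
    [/\ (* B and T are subposets isomorphic to the Boolean lattice [1]^(p+1) *)
        (forall X Y, (fB X \subset fB Y) = (X \subset Y)),
        (forall X Y, (fT X \subset fT Y) = (X \subset Y)),
        (* M has p+1 elements *)
        injective m,
        (* Tr(G) is the disjoint union of B, M, T *)
        Tr G = B :|: M :|: T /\
        [/\ [disjoint B & M], [disjoint B & T] & [disjoint M & T]] &
        (* the covering relations of Tr(G) *)
        forall X Y, covin (Tr G) X Y =
          [|| covin B X Y, covin T X Y,
              [exists i, (X == fB (~: [set i])) && (Y == m i)],
              [exists i, (X == m i) && (Y == fT [set sigma i])]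
            | (X == fB setT) && (Y == fT set0)]].
Proof.
move=> pp iso; have [abG cardE subsE E1n E1G] := Gfacts p gT G pp iso.
pose c (i : 'I_p.+1) : {group gT} := enum_val (cast_ord (esym cardE) i).
have cE : forall i, c i \in 'E_p^1(G) by move=> i; exact: enum_valP.
have cG : forall i, c i \subset G by move=> i; case/pnElemP: (cE i).
have c1 : forall i, c i != 1%G.
  by move=> i; apply: contra (E1n _ (cE i)) => /eqP ->.
have cGn : forall i, c i != G.
  by move=> i; apply: contra (E1G _ (cE i)) => /eqP ->.
have cinj : injective c by move=> i j /enum_val_inj /cast_ord_inj.
have G1 : G != 1%G.
  apply/negP => /eqP e; have := cG ord0; rewrite e subG1 => /eqP e0.
  by move: (c1 ord0); rewrite (_ : c ord0 = 1%G) ?eqxx //; apply: val_inj.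
have cI : forall i j, i != j -> c i :&: c j = 1.
  move=> i j ij; apply/(TIp1ElemP (cE i) (cE j)).
  by apply: contra ij => /eqP e; apply/eqP; apply: cinj; apply: val_inj.
have subs : forall H : {group gT}, H \subset G ->
    [\/ H = 1%G, H = G | exists i, H = c i].
  move=> H sHG; case: (subsE H sHG) => [->|->|HE]; [by constructor 1|by constructor 2|].
  constructor 3; exists (cast_ord cardE (enum_rank_in HE H)).
  by rewrite /c cast_ordK enum_rankK_in.
split; last exact: (main_gen _ _ _ c abG cG c1 cGn G1 cinj cI subs).
rewrite (cardTr _ _ _ c abG cG c1 cGn G1 cinj cI subs) (expnS 2 p.+1).
by rewrite mul2n -addnn addnAC addn1 addnS.
Qed.
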